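(* Let $X$ be a real Hilbert space, $T:X\to X$, $C\subseteq X$ nonempty and $\varphi:[0,\infty)\to[0,\infty)$ an increasing function vanishing only at $0$. If $T$ is uniformly $(P_2)$ on $C$ with modulus $\varphi$, then $T$ is uniformly firmly nonexpansive on $C$ with modulus $\varphi$.
   Context: $T$ is uniformly firmly nonexpansive on $C$ with modulus $\varphi$ if $T(C)\subseteq C$ and for all $x,y\in C$, $t\in[0,1]$: $\|Tx-Ty\|^2\le\|((1-t)x+tTx)-((1-t)y+tTy)\|^2-2(1-t)\varphi(\|Tx-Ty\|)$. $T$ is uniformly $(P_2)$ on $C$ with modulus $\varphi$ if $T(C)\subseteq C$ and for all $x,y\in C$: $2\|Tx-Ty\|^2\le\|x-Ty\|^2+\|y-Tx\|^2-\|x-Tx\|^2-\|y-Ty\|^2-2\varphi(\|Tx-Ty\|)$. *)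

(* Defs.v *)
From mathcomp Require Import all_boot all_order all_algebra.
From mathcomp Require Import all_classical all_reals all_analysis.
Import Order.TTheory GRing.Theory Num.Theory.
Import numFieldNormedType.Exports.
Local Open Scope ring_scope.
Local Open Scope classical_set_scope.

(* A real Hilbert space: a complete normed space over R whose norm comes
   from a symmetric, bilinear, positive definite inner product. *)
Definition is_inner_product {R : realType} {X : normedModType R}
  (ip : X -> X -> R) : Prop :=
  (forall x y, ip x y = ip y x) /\
  (forall x y z, ip (x + y) z = ip x z + ip y z) /\
  (forall (a : R) x y, ip (a *: x) y = a * ip x y) /\
  (forall x, 0 <= ip x x) /\
  (forall x, ip x x = 0 -> x = 0) /\
  (forall x, `|x| = Num.sqrt (ip x x)).

Definition unif_firmly_nonexpansive {R : realType} {X : normedModType R}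
  (T : X -> X) (C : set X) (phi : R -> R) : Prop :=
  (T @` C `<=` C) /\
  forall x y, C x -> C y -> forall t : R, 0 <= t <= 1 ->
    `|T x - T y| ^+ 2 <=
      `|((1 - t) *: x + t *: T x) - ((1 - t) *: y + t *: T y)| ^+ 2
      - 2 * (1 - t) * phi `|T x - T y|.

Definition unif_P2 {R : realType} {X : normedModType R}
  (T : X -> X) (C : set X) (phi : R -> R) : Prop :=
  (T @` C `<=` C) /\
  forall x y, C x -> C y ->
    2 * `|T x - T y| ^+ 2 <=
      `|x - T y| ^+ 2 + `|y - T x| ^+ 2 - `|x - T x| ^+ 2 - `|y - T y| ^+ 2
      - 2 * phi `|T x - T y|.

(* Main.v *)
Require Import Defs.
From mathcomp Require Import all_boot all_order all_algebra.
From mathcomp Require Import all_classical all_reals all_analysis.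
From mathcomp Require Import lra.
Import Order.TTheory GRing.Theory Num.Theory.
Import numFieldNormedType.Exports.
Local Open Scope ring_scope.
Local Open Scope classical_set_scope.

Section IP.
Context {R : realType} {X : completeNormedModType R} {ip : X -> X -> R}.
Variable hip : is_inner_product ip.

Lemma ipC x y : ip x y = ip y x. Proof. by case: hip. Qed.
Lemma ipDl x y z : ip (x + y) z = ip x z + ip y z.
Proof. by case: hip => _ []. Qed.
Lemma ipZl (a : R) x y : ip (a *: x) y = a * ip x y.
Proof. by case: hip => _ [] _ []. Qed.
Lemma ipDr x y z : ip z (x + y) = ip z x + ip z y.
Proof. by rewrite ipC ipDl (ipC x) (ipC y). Qed.
Lemma ipZr (a : R) x y : ip y (a *: x) = a * ip y x.
Proof. by rewrite ipC ipZl ipC. Qed.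
Lemma ipNl x y : ip (- x) y = - ip x y.
Proof. by rewrite -scaleN1r ipZl mulN1r. Qed.
Lemma ipNr x y : ip y (- x) = - ip y x.
Proof. by rewrite ipC ipNl ipC. Qed.
Lemma nsq v : `|v| ^+ 2 = ip v v.
Proof.
case: hip => _ [] _ [] _ [] h0 [] _ hn.
by rewrite hn sqr_sqrtr.
Qed.
End IP.

Theorem proposition4p3 (R : realType) (X : completeNormedModType R)
  (ip : X -> X -> R) (hip : is_inner_product ip)
  (T : X -> X) (C : set X) (hC : C !=set0) (phi : R -> R)
  (phi_ge0 : forall s, 0 <= s -> 0 <= phi s)
  (phi_incr : forall s u, 0 <= s -> s <= u -> phi s <= phi u)
  (phi_zero : forall s, 0 <= s -> (phi s = 0 <-> s = 0)) :
  unif_P2 T C phi -> unif_firmly_nonexpansive T C phi.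
Proof.
move=> [hTC hP]; split => // x y Cx Cy t /andP[t0 t1].
have := hP x y Cx Cy.
set f := phi _.
have -> : (1 - t) *: x + t *: T x - ((1 - t) *: y + t *: T y)
        = (1 - t) *: (x - y) + t *: (T x - T y).
  by rewrite opprD addrACA -!scalerBr.
rewrite !(nsq hip).
rewrite !(ipDl hip, ipDr hip, ipNl hip, ipNr hip, ipZl hip, ipZr hip).
rewrite (ipC hip y x) (ipC hip (T x) x) (ipC hip (T y) x)
  (ipC hip (T x) y) (ipC hip (T y) y) (ipC hip (T y) (T x)).
have hA : 0 <= ip (x - y - (T x - T y)) (x - y - (T x - T y)).
  by case: hip => _ [] _ [] _ [] h _; exact: h.
move: hA.
rewrite !(ipDl hip, ipDr hip, ipNl hip, ipNr hip).
rewrite (ipC hip y x) (ipC hip (T x) x) (ipC hip (T y) x)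
  (ipC hip (T x) y) (ipC hip (T y) y) (ipC hip (T y) (T x)).
move=> hA hB.
set s := 1 - t.
have s0 : 0 <= s by rewrite /s; lra.
have h1 := mulr_ge0 (mulr_ge0 s0 s0) hA.
move: hB; rewrite -subr_ge0 => hB. have h2 := mulr_ge0 s0 hB.
have -> : t = 1 - s by rewrite /s; lra.
clearbody s f.
nra.
Qed.
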